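(* Let $G$ be a connected $n$-vertex connected-domishold graph that is not complete. Let $\nu_c$ be the number of inclusion-minimal connected dominating sets of $G$ and $\nu_s$ the number of minimal cutsets of $G$. Then $\nu_s\le (n-2)\nu_c$ and $\nu_c\le (n-2)\nu_s$.
   Context: A connected dominating set of a connected graph $G$ is a set $S\subseteq V(G)$ such that every vertex outside $S$ has a neighbor in $S$ and $G[S]$ is connected. $G$ is connected-domishold if there exist $w:V(G)\to\mathbb{R}_{\ge0}$, $t\in\mathbb{R}_{\ge0}$ such that for all $S\subseteq V(G)$, $\sum_{x\in S}w(x)\ge t$ iff $S$ is a connected dominating set. A cutset is a set $S\subseteq V(G)$ such that $G-S$ is disconnected; it is minimal if it contains no other cutset. *)

(* Defs.v *)
From Stdlib Require Import Reals.
From mathcomp Require Import all_boot.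

Set Implicit Arguments.
Unset Strict Implicit.
Unset Printing Implicit Defensive.

Definition simple_graph (T : finType) (e : rel T) : Prop :=
  symmetric e /\ irreflexive e.

(* The subgraph induced by S is connected: any two vertices of S are joined
   by a path inside S.  (The empty induced graph counts as connected.) *)
Definition induced_connected (T : finType) (e : rel T) (S : {set T}) : bool :=
  [forall x in S, forall y in S,
     connect (fun a b => [&& e a b, a \in S & b \in S]) x y].

Definition graph_connected (T : finType) (e : rel T) : bool :=
  induced_connected e [set: T].

Definition complete_graph (T : finType) (e : rel T) : bool :=
  [forall x : T, forall y : T, (x != y) ==> e x y].

Definition dominating (T : finType) (e : rel T) (S : {set T}) : bool :=
  [forall x, (x \notin S) ==> [exists y in S, e x y]].

Definition connected_dominating (T : finType) (e : rel T) (S : {set T}) : bool :=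
  dominating e S && induced_connected e S.

Definition cutset (T : finType) (e : rel T) (S : {set T}) : bool :=
  ~~ induced_connected e (~: S).

Definition connected_domishold (T : finType) (e : rel T) : Prop :=
  exists (w : T -> R) (t : R),
    (forall x, Rle R0 (w x)) /\ Rle R0 t /\
    forall S : {set T},
      (Rle t (\big[Rplus/R0]_(x in S) w x) <-> connected_dominating e S).

Definition minimal_cds_set (T : finType) (e : rel T) : {set {set T}} :=
  [set S | minset (connected_dominating e) S].

Definition minimal_cutset_set (T : finType) (e : rel T) : {set {set T}} :=
  [set S | minset (cutset e) S].

(* Main.v *)
Set Warnings "-notation-overridden,-redundant-canonical-projection".
From HB Require Import structures.
Require Import Defs.
From Stdlib Require Import Reals Lra ClassicalEpsilon.
From mathcomp Require Import all_boot zify.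
Set Implicit Arguments.
Unset Strict Implicit.
Unset Printing Implicit Defensive.


Lemma RplusA' : associative Rplus.
Proof. by move=> x y z; rewrite Rplus_assoc. Qed.
HB.instance Definition _ := Monoid.isComLaw.Build R R0 Rplus RplusA' Rplus_comm Rplus_0_l.

Section W.
Variables (T : finType) (w : T -> R).
Definition W (S : {set T}) := \big[Rplus/R0]_(x in S) w x.

Lemma W_swap (S : {set T}) (i j : T) : j \in S -> i \notin S ->
  W (i |: (S :\ j)) = Rplus (Rminus (W S) (w j)) (w i).
Proof.
move=> jS iS; rewrite /W big_setU1; last by rewrite !inE negb_and iS orbT.
rewrite (big_setD1 _ jS) /=; lra.
Qed.

Lemma W_mono (S S' : {set T}) : (forall x, Rle R0 (w x)) -> S \subset S' -> Rle (W S) (W S').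
Proof.
move=> w0 sub; rewrite /W (big_setID (A := S') S) /=.
have -> : S' :&: S = S by apply/setIidPr.
have : Rle R0 (\big[Rplus/R0]_(x in S' :\: S) w x).
  by apply: (big_ind (fun x => Rle R0 x)) => //; [lra | move=> *; lra].
lra.
Qed.
End W.

Section LemA.
Variables (T : finType) (f : {set T} -> bool) (w : T -> R) (k : nat) (x0 : T).
Hypothesis fmono : forall S S' : {set T}, S \subset S' -> f S -> f S'.
Hypothesis freg : forall (S : {set T}) i j, j \in S -> i \notin S -> Rle (w j) (w i) -> f S -> f (i |: (S :\ j)).
Hypothesis fT : f setT.
Hypothesis fk : forall S : {set T}, minset f S -> #|S| <= k.

Let MaxF := [set S | maxset (fun B => ~~ f B) S].
Let MinT := [set S | minset f S].

Lemma exists_min (A : {set T}) : A != set0 -> exists2 j, j \in A & forall x, x \in A -> Rle (w j) (w x).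
Proof.
move: {2}#|A| (erefl #|A|) => m; elim: m A => [|m IH] A cA nA.
  by move: nA; rewrite -cards_eq0 cA.
have /set0Pn [a aA] := nA.
case: (boolP (A :\ a == set0)) => [/eqP A0|nA'].
  exists a => // x xA; have : x \in A :\ a = false by rewrite A0 inE.
  by rewrite !inE xA andbT => /negbFE/eqP ->; lra.
have cA' : #|A :\ a| = m by move: cA; rewrite (cardsD1 a A) aA add1n => -[].
have [j jA' jm] := IH _ cA' nA'.
case: (Rle_dec (w j) (w a)) => h.
  exists j; first by move: jA'; rewrite !inE => /andP[].
  move=> x xA; case: (eqVneq x a) => [->//|xa]; apply: jm; by rewrite !inE xa.
exists a => // x xA; case: (eqVneq x a) => [->|xa]; first lra.
have := jm x; rewrite !inE xa xA => /(_ isT); lra.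
Qed.

Definition good (F : {set T}) (p : {set T} * T) :=
  p.1 \in MinT /\ p.2 \in p.1 /\ p.2 \notin F /\ p.1 \subset p.2 |: F /\
  forall x, x \notin F -> Rle (w p.2) (w x).

Lemma good_ex F : F \in MaxF -> exists p, good F p.
Proof.
rewrite inE => /maxsetP [nfF Fmax].
have nF : ~: F != set0.
  apply/negP => /eqP /(congr1 (@setC T)); rewrite setCK setC0 => FT.
  by move: nfF; rewrite FT fT.
have [j jF jm] := exists_min nF.
have fjF : f (j |: F).
  apply/negPn/negP => nf; have := Fmax _ nf (subsetUr _ _) => /setP /(_ j).
  by rewrite !inE eqxx /=; move: jF; rewrite inE => /negbTE ->.
have [T0 mT0 sT0] := minset_exists fjF.
exists (T0, j); rewrite /good /= inE mT0; split => //; split.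
  apply/negPn/negP => jT0; move: nfF; rewrite (fmono _ (minsetp mT0)) //.
  apply/subsetP => x xT0; have := subsetP sT0 x xT0; rewrite !inE.
  by case/orP => // /eqP ex; move: jT0; rewrite -ex xT0.
split; first by move: jF; rewrite inE.
split => // x xF; apply: jm; by rewrite inE.
Qed.

Lemma good_char F p x : F \in MaxF -> good F p ->
  (x \in F <-> (x != p.2 /\ (Rlt (w x) (w p.2) \/ x \in p.1))).
Proof.
case: p => T0 j; rewrite inE => /maxsetP [nfF _] [/=]; rewrite inE => mT0 [jT0 [jF [sT0 jm]]].
split.
  move=> xF; split; first by apply/eqP => ex; move: jF; rewrite -ex xF.
  case: (Rlt_le_dec (w x) (w j)) => h; [by left | right].
  apply/negPn/negP => xT0.
  have := freg jT0 xT0 h (minsetp mT0) => /fmono H.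
  move: nfF; rewrite H //; apply/subsetP => y; rewrite !inE.
  case/orP => [/eqP -> // | /andP [yj yT0]].
  by have := subsetP sT0 y yT0; rewrite !inE (negbTE yj).
move=> [xj [h | xT0]].
  apply/negPn/negP => xF; have := jm x xF; lra.
by have := subsetP sT0 x xT0; rewrite !inE (negbTE xj).
Qed.

Definition hF (F : {set T}) : {set T} * T :=
  match excluded_middle_informative (F \in MaxF) with
  | left H => proj1_sig (constructive_indefinite_description _ (good_ex H))
  | right _ => (set0, x0)
  end.

Lemma hF_good F : F \in MaxF -> good F (hF F).
Proof.
move=> H; rewrite /hF; case: excluded_middle_informative => // H'.
exact: proj2_sig (constructive_indefinite_description _ (good_ex H')).
Qed.

Lemma hF_inj : {in MaxF &, injective hF}.
Proof.
move=> F1 F2 H1 H2 e; apply/setP => x.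
have c1 := good_char x H1 (hF_good H1); have c2 := good_char x H2 (hF_good H2).
rewrite e in c1; apply/idP/idP => h.
  by apply/c2/c1.
by apply/c1/c2.
Qed.

Let Pairs := [set p : {set T} * T | (p.1 \in MinT) && (p.2 \in p.1)].

Lemma card_Pairs : #|Pairs| <= k * #|MinT|.
Proof.
rewrite -sum1_card.
rewrite (eq_bigl (fun p : {set T} * T => (p.1 \in MinT) && (p.2 \in p.1))); last first.
  by move=> p; rewrite inE.
rewrite -(pair_big_dep (fun S => S \in MinT) (fun S j => j \in S) (fun _ _ => 1)) /=.
apply: (@leq_trans (\sum_(S in MinT) k)).
  apply: leq_sum => S; rewrite inE => mS; rewrite sum1_card; exact: fk.
by rewrite sum_nat_const mulnC.
Qed.

Lemma lemA : #|MaxF| <= k * #|MinT|.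
Proof.
rewrite -(card_in_imset hF_inj); apply: leq_trans card_Pairs.
apply: subset_leq_card; apply/subsetP => p /imsetP [F HF ->].
have [H1 [H2 _]] := hF_good HF; by rewrite inE H1 H2.
Qed.
End LemA.

Lemma connect_ind' (T : finType) (e : rel T) (a : T) (P : T -> Prop) :
  P a -> (forall u v, connect e a u -> P u -> e u v -> P v) ->
  forall y, connect e a y -> P y.
Proof.
move=> Pa step y /connectP [p pp ->].
suff: forall x, connect e a x -> P x -> path e x p -> P (last x p).
  by apply => //; exact: connect0.
elim: p {pp} => [//|h p IH] x cx Px /= /andP [exh pp].
apply: IH => //; first by apply: connect_trans cx (connect1 exh).
exact: step exh.
Qed.

Lemma connect_transfer (T : finType) (e1 e2 : rel T) a :
  (forall u v, connect e1 a u -> connect e2 a u -> e1 u v -> e2 u v) ->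
  forall y, connect e1 a y -> connect e2 a y.
Proof.
move=> H y c.
suff: connect e1 a y /\ connect e2 a y by case.
apply: (connect_ind' (P := fun u => connect e1 a u /\ connect e2 a u)) c.
  by split; exact: connect0.
move=> u v _ [c1 c2] euv; split; first exact: connect_trans c1 (connect1 euv).
exact: connect_trans c2 (connect1 (H _ _ c1 c2 euv)).
Qed.

Section G.
Variables (T : finType) (e : rel T).
Hypothesis se : simple_graph e.

Definition rS (S : {set T}) := fun a b => [&& e a b, a \in S & b \in S].

Lemma rS_sym (S : {set T}) : connect_sym (rS S).
Proof.
apply: sym_connect_sym => x y; rewrite /rS (proj1 se).
by case: (x \in S); case: (y \in S); rewrite ?andbT ?andbF.
Qed.

Lemma rS_mem (S : {set T}) a u : connect (rS S) a u -> u = a \/ u \in S.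
Proof.
apply: (@connect_ind' _ _ a (fun u => u = a \/ u \in S)); first by left.
by move=> u' v _ _ /and3P [_ _ ->]; right.
Qed.

Lemma icP (S : {set T}) : reflect (forall x y, x \in S -> y \in S -> connect (rS S) x y)
  (induced_connected e S).
Proof.
apply: (iffP idP).
  by move=> /forallP H x y xS yS; move: (H x); rewrite xS => /forallP /(_ y); rewrite yS.
by move=> H; apply/forallP => x; apply/implyP => xS; apply/forallP => y; apply/implyP; apply: H.
Qed.

Lemma noncut (S : {set T}) a : induced_connected e S -> a \in S -> 1 < #|S| ->
  exists2 x, x \in S :\ a & induced_connected e (S :\ x).
Proof.
move=> /icP cS aS cardS.
have [x1 x1S] : exists x1, x1 \in S :\ a.
  apply/set0Pn; rewrite -cards_eq0 -lt0n.
  by rewrite (cardsD1 a S) aS add1n ltnS in cardS.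
pose K x := [set y | connect (rS (S :\ x)) a y].
case: (@arg_maxnP _ x1 (mem (S :\ a)) (fun x => #|K x|) x1S) => x xSa xmax.
exists x => //.
have aSx : a \in S :\ x by rewrite !inE aS andbT; move: xSa; rewrite !inE eq_sym => /andP [].
have allK : forall y, y \in S :\ x -> y \in K x.
  move=> y ySx; apply/negPn/negP => yK.
  have ya : y != a by apply: contraNneq yK => ->; rewrite inE connect0.
  have ySa : y \in S :\ a by move: ySx; rewrite !inE ya => /andP [].
  have sub : K x \subset K y.
    apply/subsetP => u; rewrite !inE; apply: connect_transfer => u' v c1 c2 /and3P [euv u'S vS].
    have vK : v \in K x by rewrite inE (connect_trans c1) // connect1 // /rS euv u'S vS.
    have u'K : u' \in K x by rewrite inE.
    move: u'S vS; rewrite /rS euv !inE => /andP [u'x u'S] /andP [vx vS].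
    rewrite u'S vS /= !andbT; apply/andP; split.
      by apply: contraNneq yK => <-.
    by apply: contraNneq yK => <-.
  have [k kK ekx] : exists2 k, k \in K x & e k x.
    case: (boolP [exists k, (k \in K x) && e k x]) => [/existsP [k /andP [? ?]]|nk].
      by exists k.
    exfalso; move/negP: yK; apply; rewrite inE.
    have ySS : y \in S by move: ySx; rewrite inE => /andP [].
    apply: (connect_transfer _ (cS a y aS ySS)) => u v c1 c2 /and3P [euv uS vS].
    have uK : u \in K x by rewrite inE.
    have ux : u != x.
      case: (rS_mem c2) => [-> | ]; first by move: aSx; rewrite !inE => /andP [].
      by rewrite !inE => /andP [].
    have vx : v != x.
      apply: contraNneq nk => ev; apply/existsP; exists u; by rewrite uK -ev euv.
    by rewrite /rS euv !inE ux vx uS vS.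
  have kSx : k \in S :\ x.
    move: kK; rewrite inE => /rS_mem [->|//]; exact: aSx.
  have xKy : x \in K y.
    have := subsetP sub k kK; rewrite !inE => cak.
    apply: (connect_trans cak); apply: connect1.
    move: kSx; rewrite /rS ekx !inE => /andP [kx kS].
    have ky : k != y by apply: contraNneq yK => <-.
    have xS : x \in S by move: xSa; rewrite !inE => /andP [].
    rewrite ky kS xS /= andbT; by rewrite eq_sym; move: ySx; rewrite !inE => /andP [].
  have xKx : x \notin K x.
    rewrite inE; apply/negP => /rS_mem [xa|]; last by rewrite !inE eqxx.
    by move: xSa; rewrite xa !inE eqxx.
  have : #|K x| < #|K y|.
    apply: proper_card; apply/properP; split => //; by exists x.
  move=> lt; have := xmax y ySa; rewrite /geq /= => h.
  by move: (leq_ltn_trans h lt); rewrite ltnn.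
apply/icP => u v uS vS.
have cu := allK u uS; have cv := allK v vS; rewrite inE in cu; rewrite inE in cv.
apply: (@connect_trans _ _ a); last exact: cv.
rewrite (rS_sym (S :\ x)). exact: cu.
Qed.

Lemma first_step (S : {set T}) x s : connect (rS S) x s -> s != x ->
  exists2 h, h \in S :\ x & e x h.
Proof.
move=> /connectP [[|h p] /= pp ->]; first by rewrite eqxx.
move: pp => /andP [/and3P [exh xS hS] _]; exists h => //.
rewrite !inE hS andbT; apply: contraTneq exh => ->; by rewrite (proj2 se).
Qed.

Lemma two_out (A : {set T}) u v : u \in A -> v \in A -> u != v -> 2 <= #|A|.
Proof.
move=> uA vA uv; have <- : #|[set u; v]| = 2 by rewrite cards2 uv.
apply: subset_leq_card; apply/subsetP => z; rewrite !inE => /orP [] /eqP ->//.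
Qed.

Lemma cutset_size C : cutset e C -> #|C| <= #|T| - 2.
Proof.
rewrite /cutset => nc.
have [p [q [pC [qC npq]]]] : exists p q, p \in ~: C /\ q \in ~: C /\ ~~ connect (rS (~: C)) p q.
  case: (boolP [exists p, exists q, [&& p \in ~: C, q \in ~: C & ~~ connect (rS (~: C)) p q]]).
    by move=> /existsP [p /existsP [q /and3P [? ? ?]]]; exists p, q.
  move=> H; exfalso; move/negP: nc; apply; apply/icP => p q pC qC.
  apply/negPn/negP => npq; move/negP: H; apply; apply/existsP; exists p; apply/existsP; exists q.
  by rewrite pC qC.
have pq : p != q by apply: contraNneq npq => ->; exact: connect0.
have := two_out pC qC pq; rewrite -(cardsC C) => h.
by rewrite -addnBA // leq_addr.
Qed.

Lemma nbr_cut x q : x != q -> ~~ e x q -> cutset e [set y | e x y].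
Proof.
move=> xq nexq; apply/negP => /icP H.
have xC : x \in ~: [set y | e x y] by rewrite !inE (proj2 se).
have qC : q \in ~: [set y | e x y] by rewrite !inE nexq.
have qx : q != x by rewrite eq_sym.
have [h] := first_step (H x q xC qC) qx.
by rewrite !inE => /andP [_ /negbTE ->].
Qed.


Lemma noncomplete_pair : ~ complete_graph e -> exists x y, x != y /\ ~~ e x y.
Proof.
move=> nc; case: (boolP [exists x, exists y, (x != y) && ~~ e x y]).
  by move=> /existsP [x /existsP [y /andP [? ?]]]; exists x, y.
move=> H; exfalso; apply: nc; apply/forallP => x; apply/forallP => y; apply/implyP => xy.
apply/negPn/negP => nxy; move/negP: H; apply; apply/existsP; exists x; apply/existsP; exists y.
by rewrite xy.
Qed.

Lemma cds_nonempty (S : {set T}) (z : T) : dominating e S -> exists s, s \in S.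
Proof.
move=> /forallP /(_ z); case: (boolP (z \in S)) => [zS _|_ /= /existsP [y /andP [yS _]]].
  by exists z.
by exists y.
Qed.

Lemma key (S : {set T}) : ~ complete_graph e ->
  (~~ connected_dominating e S <-> exists C, cutset e C /\ C \subset ~: S).
Proof.
move=> nc; have [x0 [y0 [x0y0 nex0y0]]] := noncomplete_pair nc.
split.
  rewrite /connected_dominating negb_and; case: (boolP (dominating e S)) => /= dS.
    move=> nic; exists (~: S); split => //; by rewrite /cutset setCK.
  move=> _.
  case: (set_0Vmem S) => [S0 | [s sS]].
    exists [set y | e x0 y]; split; first exact: nbr_cut x0y0 nex0y0.
    by rewrite S0 setC0 subsetT.
  have [x xS ndx] : exists2 x, x \notin S & ~~ [exists y in S, e x y].
    case: (boolP [exists x, (x \notin S) && ~~ [exists y in S, e x y]]).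
      by move=> /existsP [x /andP [? ?]]; exists x.
    move=> H; exfalso; move/negP: dS; apply; apply/forallP => x; apply/implyP => xS.
    case: (boolP [exists y in S, e x y]) => // nd; move/negP: H; case; apply/existsP; exists x; by rewrite xS nd.
  exists [set y | e x y]; split.
    apply: (@nbr_cut x s); first by apply: contraNneq xS => ->.
    apply/negP => exs; move/negP: ndx; apply; apply/existsP; exists s; by rewrite sS.
  apply/subsetP => y; rewrite !inE => exy; apply/negP => yS.
  move/negP: ndx; apply; apply/existsP; exists y; by rewrite yS.
move=> [C [cC sC]]; apply/negP => /andP [dS iS].
move/negP: cC; apply; apply/icP => p q pC qC.
have [s0 s0S] := cds_nonempty x0 dS.
have ciS := iS; move/icP: ciS => ciS.
have SC : forall u, u \in S -> u \in ~: C.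
  by move=> u uS; rewrite inE; apply/negP => uC; move: (subsetP sC u uC); rewrite inE uS.
have toS : forall u, u \in ~: C -> connect (rS (~: C)) u s0.
  move=> u uC.
  have inS : forall v, v \in S -> connect (rS (~: C)) v s0.
    move=> v vS; apply: (connect_transfer _ (ciS v s0 vS s0S)).
    by move=> a b _ _ /and3P [eab aS bS]; rewrite /rS eab !SC.
  case: (boolP (u \in S)) => [uS|uS]; first exact: inS.
  move: dS => /forallP /(_ u); rewrite uS /= => /existsP [y /andP [yS euy]].
  apply: (connect_trans _ (inS y yS)); apply: connect1; by rewrite /rS euy uC SC.
apply: (@connect_trans _ _ s0); first exact: toS.
by rewrite (rS_sym (~: C)); apply: toS.
Qed.


Lemma three_le : graph_connected e -> ~ complete_graph e -> 3 <= #|T|.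
Proof.
move=> gc nc; have [x [y [xy nexy]]] := noncomplete_pair nc.
move/icP: gc => gc.
have yx : y != x by rewrite eq_sym.
have [h hx exh] := first_step (gc x y (in_setT x) (in_setT y)) yx.
have hx' : h != x by move: hx; rewrite !inE => /andP [].
have hy : h != y by apply: contraNneq nexy => <-.
have <- : #|[set x; y; h]| = 3.
  by rewrite -setUA cardsU1 cards2 !inE negb_or xy /= ![_ == h]eq_sym hx' hy.
rewrite -cardsT; apply: subset_leq_card; exact: subsetT.
Qed.

Lemma cds_size (S : {set T}) : graph_connected e -> ~ complete_graph e ->
  minset (connected_dominating e) S -> #|S| <= #|T| - 2.
Proof.
move=> gc nc /minsetP [/andP [dS iS] Smin].
have n3 := three_le gc nc.
rewrite leqNgt; apply/negP => big.
have cC := cardsC S.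
have uo : forall u v, u \notin S -> v \notin S -> u = v.
  move=> u v uS vS; apply/eqP/negPn/negP => uv.
  have := two_out (A := ~: S) (u := u) (v := v); rewrite !inE => /(_ uS vS uv) h2.
  lia.
have S2 : 1 < #|S| by lia.
have [a aS aall] : exists2 a, a \in S & forall u, u \notin S -> e u a.
  case: (boolP [exists v, v \notin S]) => [/existsP [v vS]|nv].
    move: dS => /forallP /(_ v); rewrite vS /= => /existsP [a /andP [aS eva]].
    by exists a => // u uS; rewrite (uo u v uS vS).
  have [a aS] : exists a, a \in S.
    by apply/set0Pn; rewrite -cards_eq0; lia.
  exists a => // u uS; exfalso; move/negP: nv; apply; apply/existsP; by exists u.
have [x xSa icx] := noncut iS aS S2.
have xa : x != a by move: xSa; rewrite !inE => /andP [].
have xS : x \in S by move: xSa; rewrite !inE => /andP [].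
have cdx : connected_dominating e (S :\ x).
  rewrite /connected_dominating icx andbT; apply/forallP => u; apply/implyP.
  rewrite !inE negb_and negbK => /orP [/eqP ->|uS].
    move/icP: iS => iS; have ax : a != x by rewrite eq_sym.
    have [h hS exh] := first_step (iS x a xS aS) ax.
    by apply/existsP; exists h; rewrite hS.
  apply/existsP; exists a; rewrite !inE aS andbT aall // eq_sym xa.
  done.
have := Smin _ cdx (subD1set S x) => /setP /(_ x).
by rewrite !inE eqxx xS.
Qed.

End G.

Section Main.
Variables (T : finType) (e : rel T).
Hypothesis se : simple_graph e.
Hypothesis nc : ~ complete_graph e.
Let f := connected_dominating e.

Lemma L1 C : minset (cutset e) C -> maxset (fun B => ~~ f B) (~: C).
Proof.
move=> /minsetP [cC Cmin]; apply/maxsetP; split.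
  apply/(key _ _ nc); first exact: se. exists C; by rewrite setCK.
move=> B nfB sB; have [C' [cC' sC']] := (key se B nc).1 nfB.
have eC : C' = C by apply: Cmin cC' _; apply: subset_trans sC' _; rewrite -setCS setCK.
apply/setC_inj; rewrite setCK; apply/eqP; rewrite eqEsubset; apply/andP; split.
  by rewrite -setCS setCK.
by rewrite -eC.
Qed.

Lemma L2 S : maxset (fun B => ~~ f B) S -> minset (cutset e) (~: S).
Proof.
move=> /maxsetP [nfS Smax]; have [C [cC sC]] := (key se S nc).1 nfS.
have cplt : forall C', cutset e C' -> C' \subset ~: S -> C' = ~: S.
  move=> C' cC' sC'.
  have nf' : ~~ f (~: C') by apply/(key se _ nc); exists C'; rewrite setCK.
  have sS : S \subset ~: C' by rewrite -setCS setCK.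
  have E := Smax _ nf' sS.
  by rewrite -E setCK.
apply/minsetP; split; first by rewrite -(cplt C cC sC).
by move=> B cB sB; apply: cplt.
Qed.

Definition g (S : {set T}) := ~~ f (~: S).

Lemma L3 S : minset g S = minset (cutset e) S.
Proof.
have gP : forall B, g B <-> exists C, cutset e C /\ C \subset B.
  by move=> B; have := key se (~: B) nc; rewrite setCK.
apply/minsetP/minsetP => [[gS Smin]|[cS Smin]].
  have [C [cC sC]] := (gP S).1 gS.
  have eC : C = S by apply: Smin (sC); apply/gP; exists C.
  split; first by rewrite -eC.
  by move=> B cB sB; apply: Smin sB; apply/gP; exists B.
split; first by apply/gP; exists S.
move=> B /gP [C [cC sC]] sB.
have eC : C = S by apply: Smin cC (subset_trans sC sB).
apply/eqP; rewrite eqEsubset sB /=; by rewrite -eC.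
Qed.

Lemma L4 S : maxset (fun B => ~~ g B) S = minset f (~: S).
Proof.
rewrite maxminset; apply: minset_eq => B /=; by rewrite /g negbK setCK.
Qed.
End Main.

Theorem mainTheorem15 (T : finType) (e : rel T) :
  simple_graph e ->
  graph_connected e ->
  connected_domishold e ->
  ~ complete_graph e ->
  let n := #|T| in
  let nu_c := #|minimal_cds_set e| in
  let nu_s := #|minimal_cutset_set e| in
  (nu_s <= (n - 2) * nu_c)%N /\ (nu_c <= (n - 2) * nu_s)%N.
Proof.
move=> se gc [w [t [w0 [t0 Hw]]]] nc n nu_c nu_s.
have [x0 _] := noncomplete_pair nc.
pose f := connected_dominating e.
have fW : forall S, f S <-> Rle t (W w S) by move=> S; rewrite /W; split => /Hw.
have fT : f setT.
  rewrite /f /connected_dominating; apply/andP; split => //.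
  by apply/forallP => x; rewrite in_setT.
have fmono : forall S S' : {set T}, S \subset S' -> f S -> f S'.
  move=> S S' sS /fW h; apply/fW; have := W_mono w0 sS; lra.
split.
  have E : minimal_cutset_set e = @setC T @: [set S | maxset (fun B => ~~ f B) S].
    apply/setP => C; rewrite inE; apply/idP/imsetP.
      move=> mC; exists (~: C); last by rewrite setCK.
      by rewrite inE; apply: L1.
    by move=> [S]; rewrite inE => /L2 H ->; apply: H.
  rewrite /nu_s /nu_c E (card_imset _ (@setC_inj T)).
  apply: (lemA (w := w) x0) => //.
  - move=> S i j jS iS wji /fW fS; apply/fW; rewrite W_swap //; lra.
  - by move=> S; apply: cds_size.
have gmono : forall S S' : {set T}, S \subset S' -> g e S -> g e S'.
  move=> S S' sS; rewrite /g; apply: contraNN; apply: fmono; by rewrite setCS.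
have E1 : minimal_cds_set e = @setC T @: [set S | maxset (fun B => ~~ g e B) S].
  apply/setP => C; rewrite inE; apply/idP/imsetP.
    move=> mC; exists (~: C); last by rewrite setCK.
    by rewrite inE L4 setCK.
  by move=> [S]; rewrite inE L4 => H ->.
have E2 : minimal_cutset_set e = [set S | minset (g e) S].
  by apply/setP => S; rewrite !inE L3.
rewrite /nu_s /nu_c E1 E2 (card_imset _ (@setC_inj T)).
apply: (lemA (w := w) x0) => //.
- move=> S i j jS iS wji; rewrite /g => nfS; apply/negP => fS'; move/negP: nfS; apply.
  have eq : ~: (i |: S :\ j) = j |: (~: S) :\ i.
    apply/setP => z; rewrite !inE.
    have ij : i != j by apply: contraNneq iS => ->.
    case: (z =P i) => [->|/eqP zi] /=; first by rewrite (negbTE ij).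
    case: (z =P j) => [->|/eqP zj] /=; first by rewrite ?eqxx ?jS.
    by case: (z \in S).
  move: fS'; rewrite eq => /fW; rewrite W_swap ?inE ?jS ?iS // => h; apply/fW; lra.
- rewrite /g setCT; apply/negP => /andP [/forallP /(_ x0)]; rewrite inE /= => /existsP [y].
  by rewrite inE.
- move=> S; rewrite L3 // => /minsetp; exact: cutset_size.
Qed.
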